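(* Let $(B,\mathfrak m)$ be a local Prüfer ring such that $\mathfrak m = Z(B)$ and $\mathfrak m^2 \neq 0$ (for instance $B = \mathbb Z/8\mathbb Z$), and let $I := \mathfrak m$. Let $A := B \bowtie I$, let $f : A \to B$ be a surjective ring homomorphism, and let $J := I$. Then $A\bowtie^f J$ is a Prüfer ring and $A \bowtie^f J$ is not a Gaussian ring.
   Context: All rings are commutative with identity. For an ideal $I$ of a ring $B$, $B \bowtie I := \{(b, b+i) : b \in B, i \in I\}\subseteq B\times B$ (amalgamated duplication). For a ring homomorphism $f:A\to B$ and an ideal $J$ of $B$, $A \bowtie^f J := \{(a, f(a)+j) : a \in A, j \in J\}$, a subring of $A\times B$. $Z(B)$ is the set of zero-divisors of $B$. An ideal is regular if it contains a regular element. A ring $R$ is a Prüfer ring if every finitely generated regular ideal of $R$ is invertible. A ring $R$ is Gaussian if $c(gh)=c(g)c(h)$ for all $g,h\in R[x]$, where $c(p)$ is the ideal generated by the coefficients of $p$. *)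

(* Defs.v *)
From HB Require Import structures.
From mathcomp Require Import all_boot all_order all_algebra.
Set Implicit Arguments. Unset Strict Implicit. Unset Printing Implicit Defensive.
Import GRing.Theory.
Local Open Scope ring_scope.

Section Ideals.
Variable R : comNzRingType.

Definition is_ideal (I : R -> Prop) : Prop :=
  [/\ I 0, (forall x y, I x -> I y -> I (x + y)) & (forall r x, I x -> I (r * x))].

Definition proper_ideal (I : R -> Prop) : Prop := is_ideal I /\ ~ I 1.

Definition maximal_ideal (M : R -> Prop) : Prop :=
  proper_ideal M /\
  forall N : R -> Prop, is_ideal N -> (forall x, M x -> N x) ->
    (forall x, N x <-> M x) \/ (forall x, N x).

Definition local_ring (m : R -> Prop) : Prop :=
  maximal_ideal m /\
  forall M : R -> Prop, maximal_ideal M -> forall x, M x <-> m x.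

Definition zero_divisor (x : R) : Prop := exists y : R, y != 0 /\ x * y = 0.

Definition regular (x : R) : Prop := forall y : R, x * y = 0 -> y = 0.

Definition regular_ideal (I : R -> Prop) : Prop := exists x, I x /\ regular x.

Definition ideal_gen (s : seq R) : R -> Prop :=
  fun x => exists r : 'I_(size s) -> R, x = \sum_(i < size s) r i * s`_i.

Definition finitely_generated (I : R -> Prop) : Prop :=
  exists s : seq R, forall x, I x <-> ideal_gen s x.

Definition ideal_mul (I J : R -> Prop) : R -> Prop :=
  fun x => exists ps : seq (R * R),
    (forall p, p \in ps -> I p.1 /\ J p.2) /\ x = \sum_(p <- ps) p.1 * p.2.

(* Invertibility of an ideal I in the total ring of fractions Q(R)
   (I * (R :_Q I) = R), written out with fractions over a common regular
   denominator s: there are i_k in I and b_k in R such that each b_k/s lies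
   in (R :_Q I) (i.e. b_k * I is contained in sR) and sum_k i_k (b_k/s) = 1
   (i.e. sum_k i_k b_k = s). *)
Definition invertible_ideal (I : R -> Prop) : Prop :=
  exists s : R, regular s /\
  exists ps : seq (R * R),
    (forall p, p \in ps -> I p.1 /\
        forall i, I i -> exists r : R, p.2 * i = s * r) /\
    \sum_(p <- ps) p.1 * p.2 = s.

Definition prufer_ring : Prop :=
  forall I : R -> Prop, is_ideal I -> finitely_generated I -> regular_ideal I ->
    invertible_ideal I.

Definition content (p : {poly R}) : R -> Prop := ideal_gen (polyseq p).

Definition gaussian_ring : Prop :=
  forall g h : {poly R}, forall x,
    content (g * h) x <-> ideal_mul (content g) (content h) x.

End Ideals.

Record ideal (R : comNzRingType) := Ideal {
  ideal_pred : {pred R};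
  ideal_predP : is_ideal (fun x => x \in ideal_pred) }.

(* Amalgamation  A ⋈^f J = {(a, f a + j) : a in A, j in J} ⊆ A × B.    *)
Section Amalgamation.
Variables (A B : comNzRingType) (f : {rmorphism A -> B}) (J : ideal B).

Definition amalg_pred : {pred A * B} :=
  [pred x : A * B | x.2 - f x.1 \in ideal_pred J].

Lemma amalg_pred_subring_closed : subring_closed amalg_pred.
Proof.
have [J0 JD JM] := ideal_predP J.
have JN : forall x, x \in ideal_pred J -> - x \in ideal_pred J.
  by move=> x Jx; rewrite -mulN1r; apply: JM.
split.
- by rewrite inE /= rmorph1 subrr.
- move=> [a1 b1] [a2 b2]; rewrite !inE /= => H1 H2.
  rewrite rmorphB.
  have -> : b1 - b2 - (f a1 - f a2) = (b1 - f a1) + - (b2 - f a2).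
    by rewrite !opprB addrA [RHS]addrA [RHS]addrAC -!addrA [f a2 - _]addrC; congr (_ + _); exact: addrCA.
  by apply: JD => //; apply: JN.
- move=> [a1 b1] [a2 b2]; rewrite !inE /= => H1 H2.
  rewrite rmorphM.
  have -> : b1 * b2 - f a1 * f a2 = b1 * (b2 - f a2) + f a2 * (b1 - f a1).
    by rewrite !mulrBr [f a2 * b1]mulrC [f a2 * f a1]mulrC addrA subrK.
  by apply: JD; apply: JM.
Qed.

HB.instance Definition _ :=
  GRing.isSubringClosed.Build (A * B)%type amalg_pred amalg_pred_subring_closed.

Record amalg := Amalg { amalg_val : A * B; _ : amalg_val \in amalg_pred }.

HB.instance Definition _ := [isSub for amalg_val].
HB.instance Definition _ := [Choice of amalg by <:].
HB.instance Definition _ := [SubChoice_isSubComNzRing of amalg by <:].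

End Amalgamation.

(* Amalgamated duplication B ⋈ I = {(b, b + i)} = B ⋈^{id_B} I. *)
Definition dup (B : comNzRingType) (I : ideal B) : comNzRingType :=
  amalg (idfun : {rmorphism B -> B}) I.

(* Main.v *)
Require Import Defs.
From HB Require Import structures.
From mathcomp Require Import all_boot all_order all_algebra.
From mathcomp Require classical_sets boolp.
From mathcomp Require Import ring.
Import GRing.Theory.
Local Open Scope ring_scope.

Module ZornPart.
Import classical_sets.
Local Open Scope classical_set_scope.
Lemma max_ideal_exists (B : comNzRingType) (x : B) :
  ~ (exists y, x * y = 1) -> exists M : B -> Prop, maximal_ideal M /\ M x.
Proof.
move=> nu.
pose P : set (set B) := fun S => (forall y, ~ S y) \/ (is_ideal S /\ ~ S 1 /\ S x).
have Px : P (fun y => exists r, y = r * x).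
  right; split; [split|split].
  - by exists 0; rewrite mul0r.
  - by move=> a b [r ->] [s ->]; exists (r + s); rewrite mulrDl.
  - by move=> r a [s ->]; exists (r * s); rewrite mulrA.
  - by move=> [r]; move/esym => h; apply: nu; exists r; rewrite mulrC.
  - by exists 1; rewrite mul1r.
have [M [PM Mmax]] : exists A, P A /\ forall B, A `<` B -> ~ P B.
  apply: Zorn_bigcup => F FP Ftot.
  case: (boolp.pselect (exists y X, F X /\ X y)) => [[y0 [X0 [FX0 X0y]]]|none]; last first.
    by left => y [X FX Xy]; apply: none; exists y, X.
  have FI : forall X y, F X -> X y -> is_ideal X /\ ~ X 1 /\ X x.
    move=> X y FX Xy; case: (FP X FX) => // h; by case: (h y).
  right; split; [split|split].
  - by exists X0 => //; have [[]] := FI _ _ FX0 X0y.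
  - move=> a b [X FX Xa] [Y FY Yb].
    case: (Ftot X Y FX FY) => sub.
      exists Y => //; have [[_ hD _] _] := FI _ _ FY Yb; exact: hD (sub _ Xa) Yb.
    exists X => //; have [[_ hD _] _] := FI _ _ FX Xa; exact: hD Xa (sub _ Yb).
  - move=> r a [X FX Xa]; exists X => //; have [[_ _ hM] _] := FI _ _ FX Xa; exact: hM.
  - by move=> [X FX X1]; have [_ [h _]] := FI _ _ FX X1.
  - by exists X0 => //; have [_ [_ h]] := FI _ _ FX0 X0y.
case: PM => [M0|[Mi [M1 Mx]]].
  exfalso; apply: (Mmax (fun y => exists r, y = r * x) _ Px); split.
    by move=> y /M0.
  by move=> h; apply: (M0 x); apply: h; exists 1; rewrite mul1r.
exists M; split => //; split; first by [].
move=> N Ni MN.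
case: (boolp.pselect (N 1)) => N1.
  right => y; have [_ _ hM] := Ni; by rewrite -[y]mulr1; apply: hM.
case: (boolp.pselect (forall y, N y -> M y)) => NM.
  by left => y; split; [apply: NM | apply: MN].
exfalso; apply: (Mmax N); first by split.
by right; split => //; split => //; apply: MN.
Qed.
End ZornPart.

Lemma expand2 (T : comNzRingType) (P Q S U X : T) :
  (P + Q * X) * (S + U * X) = P * S + (P * U + Q * S) * X + (Q * U) * X ^+ 2.
Proof. ring. Qed.

Lemma gh_gen (T : comNzRingType) (a b c d e : T) :
  a * c = 0 -> b * d = 0 -> a * d + b * c = e ->
  (a%:P + b%:P * 'X) * (c%:P + d%:P * 'X) = e%:P * 'X.
Proof.
move=> h1 h2 h3; rewrite expand2 -!polyCM -polyCD h1 h2 h3 polyC0 mul0r add0r addr0 //.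
Qed.

Lemma coef_lin0 (T : comNzRingType) (a b : T) : (a%:P + b%:P * 'X)`_0 = a.
Proof. by rewrite coefD coefC coefCM coefX /= mulr0 addr0. Qed.

Lemma coef_lin1 (T : comNzRingType) (a b : T) : (a%:P + b%:P * 'X)`_1 = b.
Proof. by rewrite coefD coefC coefCM coefX /= mulr1 add0r. Qed.

Section Main.
Set Implicit Arguments. Unset Strict Implicit.
Variables (B : comNzRingType) (m : {pred B}) (hm : is_ideal (fun x => x \in m)).
Variable (hloc : local_ring (fun x => x \in m)).
Variable (hZ : forall x : B, zero_divisor x <-> x \in m).
Variable (f : {rmorphism dup (@Ideal B m hm) -> B}).
Variable (hf : forall b : B, exists a : dup (@Ideal B m hm), f a = b).
Variables (x0 y0 : B) (hx0 : x0 \in m) (hy0 : y0 \in m) (hxy : x0 * y0 != 0).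

Local Notation A := (dup (@Ideal B m hm)).
Local Notation R := (amalg f (@Ideal B m hm)).

Lemma m0 : 0 \in m. Proof. by case: hm. Qed.
Lemma mD a b : a \in m -> b \in m -> a + b \in m. Proof. by case: hm => _ h _; apply: h. Qed.
Lemma mM r a : a \in m -> r * a \in m. Proof. by case: hm => _ _ h; apply: h. Qed.
Lemma mMr r a : a \in m -> a * r \in m. Proof. by rewrite mulrC; apply: mM. Qed.
Lemma mN a : a \in m -> - a \in m. Proof. by move=> h; rewrite -mulN1r; apply: mM. Qed.
Lemma mB a b : a \in m -> b \in m -> a - b \in m. Proof. by move=> ha hb; apply: mD => //; apply: mN. Qed.
Lemma mswap a b : a - b \in m -> b - a \in m. Proof. by move=> h; rewrite -opprB; apply: mN. Qed.
Lemma one_notin : 1 \notin m.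
Proof. by apply/negP; case: hloc => [[[_ h] _] _]. Qed.

Lemma unitB y : y \notin m -> exists y', y * y' = 1.
Proof.
move=> ym; case: (boolp.pselect (exists y', y * y' = 1)) => // nu.
have [M [MM My]] := @ZornPart.max_ideal_exists _ _ nu.
case: hloc => _ /(_ M MM y) [h _].
by move: ym; rewrite (h My).
Qed.

Lemma nzd y t : y \notin m -> y * t = 0 -> t = 0.
Proof.
move=> ym yt; case: (boolp.pselect (t = 0)) => // tn.
exfalso; move/negP: ym; apply; apply/hZ; exists t; split => //; exact/eqP.
Qed.

Lemma notin_sub y z : y \notin m -> z - y \in m -> z \notin m.
Proof.
move=> ym h; apply/negP => zm; move/negP: ym; apply.
have -> : y = z - (z - y) by rewrite opprB addrC subrK.
by apply: mB.
Qed.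

Lemma inv_diff y y1 z z1 : y * y1 = 1 -> z * z1 = 1 -> y - z \in m -> y1 - z1 \in m.
Proof.
move=> h1 h2 h.
have -> : y1 - z1 = y1 * (z * z1) - z1 * (y * y1) by rewrite h1 h2 !mulr1.
have -> : y1 * (z * z1) - z1 * (y * y1) = (y1 * z1) * (z - y) by ring.
by apply: mM; apply: mswap.
Qed.

Lemma Aprop (a : A) : (val a).2 - (val a).1 \in m.
Proof. by have := valP a; rewrite inE. Qed.

Lemma Rprop (z : R) : (val z).2 - f (val z).1 \in m.
Proof. by have := valP z; rewrite inE. Qed.

Definition mkA (p : B * B) (h : p.2 - p.1 \in m) : A :=
  @Amalg B B idfun (@Ideal B m hm) p (h : p \in amalg_pred idfun (@Ideal B m hm)).

Definition mkR (p : A * B) (h : p.2 - f p.1 \in m) : R :=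
  @Amalg A B f (@Ideal B m hm) p (h : p \in amalg_pred f (@Ideal B m hm)).

Lemma unitA (a : A) : (val a).1 \notin m -> exists a', a * a' = 1.
Proof.
move=> h1.
have h2 : (val a).2 \notin m by apply: notin_sub h1 (Aprop a).
have [u hu] := unitB h1; have [u' hu'] := unitB h2.
have hd : (u, u').2 - (u, u').1 \in m.
  by apply: (inv_diff hu' hu); apply: Aprop.
exists (mkA hd); apply: val_inj.
rewrite /=.
change (((val a).1 * u, (val a).2 * u') = ((1 : B), (1 : B))).
by rewrite hu hu'.
Qed.

Lemma fM (a : A) : (val a).1 \in m -> f a \in m.
Proof.
move=> am; case: (boolp.pselect (f a \in m)) => // /negP fa.
have [u hu] := unitB fa; have [v hv] := hf u.
have k1 : (val (1 - a * v)).1 \notin m.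
  change (1 - (val a).1 * (val v).1 \notin m).
  apply/negP => h; move/negP: one_notin; apply.
  rewrite -(subrK ((val a).1 * (val v).1) 1); apply: mD => //; exact: mMr.
have [k' hk'] := unitA k1.
have : f ((1 - a * v) * k') = 1 by rewrite hk' rmorph1.
by rewrite rmorphM rmorphB rmorph1 rmorphM hv hu subrr mul0r => /esym/eqP; rewrite oner_eq0.
Qed.

Lemma unitR (z : R) : regular z -> exists z', z * z' = 1.
Proof.
move=> rz.
have cm : (val z).2 \notin m.
  apply/negP => cm.
  have [t [tm tn ct]] : exists t, [/\ t \in m, t != 0 & (val z).2 * t = 0].
    case: (boolp.pselect ((val z).2 = 0)) => c0.
      exists x0; split => //; first by apply: contraNneq hxy => ->; rewrite mul0r.
      by rewrite c0 mul0r.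
    have [t [tn ct]] := (hZ ((val z).2)).2 cm.
    exists t; split => //; apply/hZ; exists (val z).2; split; first exact/eqP.
    by rewrite mulrC.
  have ht : ((0 : A), t).2 - f ((0 : A), t).1 \in m by rewrite /= rmorph0 subr0.
  have := rz (mkR ht); rewrite /=.
  move=> /(_ _)/(congr1 (fun w : R => (val w).2)) /= h.
  move/eqP: tn; apply; apply: h; apply: val_inj.
  change (((val z).1 * 0, (val z).2 * t) = ((0 : A), (0 : B))).
  by rewrite mulr0 ct.
have fam : f (val z).1 \notin m by apply: notin_sub cm _; apply: mswap; apply: Rprop.
have a1 : (val (val z).1).1 \notin m by apply/negP => /fM; apply/negP.
have [a' ha'] := unitA a1.
have [c1 hc1] := unitB cm.
have hfa : f (val z).1 * f a' = 1 by rewrite -rmorphM ha' rmorph1.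
have hd : ((a', c1) : A * B).2 - f ((a', c1) : A * B).1 \in m.
  by apply: (inv_diff hc1 hfa); apply: Rprop.
exists (mkR hd); apply: val_inj.
change (((val z).1 * a', (val z).2 * c1) = ((1 : A), (1 : B))).
by rewrite ha' hc1.
Qed.

Lemma pruferR : prufer_ring R.
Proof.
move=> I Ii _ [z [Iz rz]].
have [z' hz'] := unitR rz.
have I1 : I 1 by case: Ii => _ _ hM; rewrite -hz' mulrC; apply: hM.
exists 1; split; first by move=> y; rewrite mul1r.
exists [:: (1, 1)]; split; last by rewrite big_seq1 mulr1.
move=> p; rewrite inE => /eqP -> /=; split => // i _; exists i; by rewrite !mul1r.
Qed.

Lemma coef_in_content (p : {poly R}) i : content p p`_i.
Proof.
case: (ltnP i (size p)) => hi.
  exists (fun j : 'I_(size p) => if (j : nat) == i then 1 else 0).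
  rewrite (bigD1 (Ordinal hi)) //= eqxx mul1r big1 ?addr0 // => j hj.
  case: ifP => [/eqP ji|]; last by rewrite mul0r.
  by move: hj; rewrite -val_eqE /= ji eqxx.
exists (fun _ => 0); rewrite big1 ?nth_default // => j _; exact: mul0r.
Qed.

Definition iota (a : A) : R.
refine (@mkR (a, f a) _). by rewrite /= subrr; apply: m0.
Defined.

Lemma iotaM a b : iota a * iota b = iota (a * b).
Proof. apply: val_inj; change ((a * b, f a * f b) = (a * b, f (a * b))); by rewrite rmorphM. Qed.
Lemma iotaD a b : iota a + iota b = iota (a + b).
Proof. apply: val_inj; change ((a + b, f a + f b) = (a + b, f (a + b))); by rewrite rmorphD. Qed.
Lemma iota0 : iota 0 = 0.
Proof. apply: val_inj; change (((0 : A), f 0) = ((0 : A), (0 : B))); by rewrite rmorph0. Qed.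

Lemma valRM (x y : R) : val (x * y) = val x * val y. Proof. by []. Qed.
Lemma valAM (x y : A) : val (x * y) = val x * val y. Proof. by []. Qed.
Lemma val_iota a : val (iota a) = (a, f a). Proof. by []. Qed.
Lemma pair_mul (U V : comNzRingType) (a c : U) (b d : V) : (a, b) * (c, d) = (a * c, b * d). Proof. by []. Qed.
Lemma fst_mul (U V : comNzRingType) (p q : U * V) : (p * q).1 = p.1 * q.1. Proof. by []. Qed.

Lemma Aprop' (a : A) c1 c2 : val a = (c1, c2) -> c2 - c1 \in m.
Proof. by move=> E; have := Aprop a; rewrite E. Qed.

Definition mkA' (u v : B) (h : v - u \in m) : A := @mkA (u, v) h.

Lemma nonGaussR : ~ gaussian_ring R.
Proof.
move=> G.
have ha : x0 - 0 \in m by rewrite subr0.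
have hb : 0 - y0 \in m by rewrite sub0r; apply: mN.
have hc : 0 - x0 \in m by rewrite sub0r; apply: mN.
have hd : y0 - 0 \in m by rewrite subr0.
have he : x0 * y0 - x0 * y0 \in m by rewrite subrr; apply: m0.
pose al := mkA' ha; pose be := mkA' hb; pose ga := mkA' hc; pose de := mkA' hd.
pose e := mkA' he.
have E1 : al * ga = 0.
  apply: val_inj; change ((0 * x0, x0 * 0) = ((0 : B), (0 : B))); by rewrite mul0r mulr0.
have E2 : be * de = 0.
  apply: val_inj; change ((y0 * 0, 0 * y0) = ((0 : B), (0 : B))); by rewrite mul0r mulr0.
have E3 : al * de + be * ga = e.
  apply: val_inj; change ((0 * 0 + y0 * x0, x0 * y0 + 0 * 0) = (x0 * y0, x0 * y0)).
  by rewrite !mul0r add0r addr0 mulrC.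
have ve : val e = (x0 * y0, x0 * y0) by [].
have val_al : val al = (0, x0) by [].
have val_de : val de = (0, y0) by [].
clearbody al be ga de e.
pose g : {poly R} := (iota al)%:P + (iota be)%:P * 'X.
pose h : {poly R} := (iota ga)%:P + (iota de)%:P * 'X.
have gh : g * h = (iota e)%:P * 'X.
  by apply: gh_gen; rewrite !iotaM ?iotaD ?E1 ?E2 ?E3 ?iota0.
have : ideal_mul (content g) (content h) (iota al * iota de).
  exists [:: (iota al, iota de)]; split; last by rewrite big_seq1.
  move=> p; rewrite inE => /eqP -> /=; split.
    have -> : iota al = g`_0 by rewrite /g coef_lin0.
    exact: coef_in_content.
  have -> : iota de = h`_1 by rewrite /h coef_lin1.
  exact: coef_in_content.
move=> /(G g h) [r] Hr.
have [c Hc] : exists c, iota al * iota de = c * iota e.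
  exists (\sum_(i < size (g * h)) r i * ('X`_i)).
  rewrite Hr mulr_suml; apply: eq_bigr => i _.
  have gi : forall k : nat, (g * h)`_k = ((iota e)%:P * 'X)`_k by move=> k; rewrite gh.
  by rewrite gi coefCM mulrCA mulrC.
rewrite iotaM in Hc.
have H := congr1 (fun w : R => val (val w).1) Hc.
rewrite val_iota valRM fst_mul val_iota /= in H.
rewrite val_al val_de ve in H.
case E : (val (val c).1) H => [c1 c2]; rewrite !pair_mul => -[] H1 H2.
have H12 := Aprop' E.
rewrite mul0r in H1.
move/eqP: hxy; apply.
case: (boolp.pselect (c2 \in m)) => c2m.
  apply: (@nzd (1 - c2)); last by rewrite mulrBl mul1r -H2 subrr.
  apply/negP => h1; move/negP: one_notin; apply.
  by rewrite -(subrK c2 1); apply: mD.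
apply: (@nzd c1); last by rewrite -H1.
apply: (@notin_sub c2); first exact/negP.
exact: mswap.
Qed.
End Main.

Theorem mainTheorem8 (B : comNzRingType) (m : {pred B})
    (hm : is_ideal (fun x => x \in m))
    (hloc : local_ring (fun x => x \in m))
    (hpruf : prufer_ring B)
    (hZ : forall x : B, zero_divisor x <-> x \in m)
    (hm2 : ~ (forall x : B, ideal_mul (fun y => y \in m) (fun y => y \in m) x -> x = 0))
    (f : {rmorphism dup (@Ideal B m hm) -> B})
    (hf : forall b : B, exists a : dup (@Ideal B m hm), f a = b) :
  prufer_ring (amalg f (@Ideal B m hm)) /\ ~ gaussian_ring (amalg f (@Ideal B m hm)).
Proof.
have [p [pin pnz]] : exists p : B * B, (p.1 \in m /\ p.2 \in m) /\ p.1 * p.2 != 0.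
  case: (boolp.pselect (exists p : B * B, (p.1 \in m /\ p.2 \in m) /\ p.1 * p.2 != 0)) => // np.
  exfalso; apply: hm2 => x [ps [hps ->]].
  rewrite big1_seq // => q /andP [_ qin].
  case: (boolp.pselect (q.1 * q.2 = 0)) => // qn; exfalso; apply: np.
  by exists q; split; [apply: hps | apply/eqP].
case: pin => h1 h2.
split; first exact: (pruferR hloc hZ hf h1 pnz).
exact: (nonGaussR hloc hZ h1 h2 pnz).
Qed.
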